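(* Fix $\theta\in(0,1)$. For positive integers $m,n$, let $\bm{D}_0\in\mathbb{R}^{m\times m}$ have i.i.d. $\mathcal{N}(0,1/m)$ entries, let $\bm{X}_0\in\mathbb{R}^{m\times n}$ have i.i.d. $BG(\theta)$ entries, and let $\Omega$ be the support of $\bm{X}_0$ and $\Omega_i\subseteq[n]$ the support of its $i$-th row, $\Omega_i^c=[n]\setminus\Omega_i$. Consider the conditions: (C1) $n\ge m+\frac{|\Omega|}{m}-1$; (C2) for all $i\in[m]$, $|\Omega_i^c|\ge m-1$; (C3) for all $i\in[m]$ and all $i'\ne i$ in $[m]$, there exists $j\in[n]$ with $(\bm{X}_0)_{i,j}=0$ and $(\bm{X}_0)_{i',j}\ne0$. Let $m,n\to\infty$ with $n/m\to\bar{n}\in(0,\infty)$. If $\bar{n}>\frac{1}{1-\theta}$, then the probability that all three conditions (C1), (C2), (C3) hold tends to $1$.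
   Context: $[n]=\{1,\dots,n\}$. A random variable $X$ is Bernoulli–Gaussian, $X\sim BG(\theta)$, if $X=W\cdot C$ with $W$ and $C$ independent, $W$ Bernoulli with $\Pr(W=1)=\theta$, and $C\sim\mathcal{N}(0,1)$. The support of a matrix or row vector is the set of indices of its nonzero entries. *)

(* Defs.v *)
From HB Require Import structures.
From mathcomp Require Import all_boot all_order all_algebra.
From mathcomp Require Import all_classical all_reals all_analysis.
Set Implicit Arguments. Unset Strict Implicit. Unset Printing Implicit Defensive.
Import Order.TTheory GRing.Theory Num.Theory.
Import numFieldNormedType.Exports.
Local Open Scope classical_set_scope.
Local Open Scope ring_scope.

(* Mutual independence of a finite family of real random variables:
   the product rule for all families of Borel sets (one per variable;
   taking B i = setT recovers every subfamily). *)
Definition mutually_independent {d} {T : measurableType d} {R : realType}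
  (P : probability T R) (I : finType) (Y : I -> T -> R) : Prop :=
  (forall i, measurable_fun setT (Y i)) /\
  forall B : I -> set R, (forall i, measurable (B i)) ->
    P (\bigcap_(i in [set: I]) (Y i @^-1` B i)) =
    (\prod_(i : I) P (Y i @^-1` B i))%E.

Definition bernoulli_rv {d} {T : measurableType d} {R : realType}
  (P : probability T R) (theta : R) (W : T -> R) : Prop :=
  (forall w, W w = 0 \/ W w = 1) /\ P [set w | W w = 1] = theta%:E.

Definition std_normal_rv {d} {T : measurableType d} {R : realType}
  (P : probability T R) (C : T -> R) : Prop :=
  forall A : set R, measurable A -> P (C @^-1` A) = normal_prob 0 1 A.

Definition iid_BG_matrix {d} {T : measurableType d} {R : realType}
  (P : probability T R) (theta : R) (m n : nat)
  (X : 'I_m -> 'I_n -> T -> R) : Prop :=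
  exists (W C : 'I_m -> 'I_n -> T -> R),
    [/\ forall i j w, X i j w = W i j w * C i j w,
        forall i j, bernoulli_rv P theta (W i j),
        forall i j, std_normal_rv P (C i j) &
        mutually_independent P
          (fun k : ('I_m * 'I_n) + ('I_m * 'I_n) =>
             match k with inl ij => W ij.1 ij.2 | inr ij => C ij.1 ij.2 end)].

Definition row_supp {R : realType} {m n : nat} (M : 'I_m -> 'I_n -> R)
  (i : 'I_m) : {set 'I_n} := [set j | M i j != 0].

Definition supp_card {R : realType} {m n : nat} (M : 'I_m -> 'I_n -> R) : nat :=
  \sum_(i < m) #|row_supp M i|.

Definition cond1 {R : realType} {m n : nat} (M : 'I_m -> 'I_n -> R) : Prop :=
  (m%:R + (supp_card M)%:R / m%:R - 1 <= n%:R :> R).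

Definition cond2 {R : realType} {m n : nat} (M : 'I_m -> 'I_n -> R) : Prop :=
  forall i : 'I_m, (m - 1 <= #|~: row_supp M i|)%N.

Definition cond3 {R : realType} {m n : nat} (M : 'I_m -> 'I_n -> R) : Prop :=
  forall i i' : 'I_m, i != i' -> exists j : 'I_n, M i j = 0 /\ M i' j != 0.

(* Submission.v *)
Require Import Defs.
From HB Require Import structures.
From mathcomp Require Import all_boot all_order all_algebra.
From mathcomp Require Import all_classical all_reals all_analysis.
From mathcomp Require Import ring lra zify.
Import Order.TTheory GRing.Theory Num.Theory.
Import numFieldNormedType.Exports.
Local Open Scope classical_set_scope.
Local Open Scope ring_scope.

Section Fixed.
Variables (R : realType) (d : measure_display) (T : measurableType d) (P : probability T R).
Variables (theta : R) (m n : nat) (W C : 'I_m -> 'I_n -> T -> R).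
Hypothesis hW1 : forall i j, P [set w | W i j w = 1] = theta%:E.
Hypothesis hC : forall i j, std_normal_rv P (C i j).
Hypothesis hind : mutually_independent P
          (fun k : ('I_m * 'I_n) + ('I_m * 'I_n) =>
             match k with inl ij => W ij.1 ij.2 | inr ij => C ij.1 ij.2 end).

Definition Q := ('I_m + 'I_m)%type.
Definition bits (w : T) : {ffun 'I_n -> {ffun Q -> bool}} :=
  [ffun j => [ffun q => match q with inl i => W i j w == 1 | inr i => C i j w != 0 end]].
Definition wt (q : Q) (b : bool) : R :=
  match q with inl _ => if b then theta else 1 - theta | inr _ => if b then 1 else 0 end.
Definition WT (F : {ffun 'I_n -> {ffun Q -> bool}}) : R :=
  \prod_j \prod_q wt q (F j q).

Lemma mW i j : measurable_fun setT (W i j).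
Proof. exact: (hind.1 (inl (i, j))). Qed.
Lemma mC i j : measurable_fun setT (C i j).
Proof. exact: (hind.1 (inr (i, j))). Qed.

Lemma mpre (f : T -> R) (B : set R) : measurable_fun setT f -> measurable B ->
  measurable (f @^-1` B).
Proof. by move=> mf mB; rewrite -[_ @^-1` _]setTI; exact: mf. Qed.

Lemma PC0 i j : P (C i j @^-1` [set 0]) = 0%E.
Proof.
rewrite (hC i j) //.
have := @normal_prob_dominates R 0 1.
move/null_content_dominatesP; apply => //.
exact: lebesgue_measure_set1.
Qed.

Lemma PW1C i j : P (W i j @^-1` ~` [set 1]) = (1 - theta)%:E.
Proof.
rewrite -preimage_setC probability_setC; last exact: (mpre _ _ (mW i j)).
by have := hW1 i j => /= ->.
Qed.

Lemma PC0C i j : P (C i j @^-1` ~` [set 0]) = 1%E.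
Proof.
rewrite -preimage_setC probability_setC; last exact: (mpre _ _ (mC i j)).
by rewrite PC0 sube0.
Qed.


Definition Bk (F : {ffun 'I_n -> {ffun Q -> bool}}) (k : ('I_m * 'I_n) + ('I_m * 'I_n)) : set R :=
  match k with
  | inl ij => if F ij.2 (inl ij.1) then [set 1] else ~` [set 1]
  | inr ij => if F ij.2 (inr ij.1) then ~` [set 0] else [set 0] end.

Lemma bits_eq F : [set w | bits w = F] =
  \bigcap_(k in [set: ('I_m * 'I_n) + ('I_m * 'I_n)])
     ((fun k : ('I_m * 'I_n) + ('I_m * 'I_n) =>
             match k with inl ij => W ij.1 ij.2 | inr ij => C ij.1 ij.2 end) k @^-1` Bk F k).
Proof.
rewrite eqEsubset; split => w /=.
- move=> <- [[i j]|[i j]] _ /=; rewrite !ffunE.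
  + by case: eqP => //= h; apply/h.
  + by case: eqP.
- move=> H; apply/ffunP => j; apply/ffunP => q; rewrite !ffunE.
  case: q => i.
  + have := H (inl (i, j)) I; rewrite /Bk /=.
    by case: (F j (inl i)) => /= h; apply/eqP => //; apply/negP => /eqP.
  + have := H (inr (i, j)) I; rewrite /Bk /=.
    by case: (F j (inr i)) => /= h; [apply/eqP|apply/negbTE/negPn/eqP].
Qed.

Lemma mBk F k : measurable (Bk F k).
Proof.
case: k => [[i j]|[i j]] /=; case: ifP => _ //; exact: measurableC.
Qed.

Lemma bits_meas F : measurable [set w | bits w = F].
Proof.
rewrite bits_eq; apply: fin_bigcap_measurable.
  exact: finite_finset.
move=> [[i j]|[i j]] _ /=.
  exact: (mpre _ _ (mW i j) (mBk F (inl (i, j)))).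

  exact: (mpre _ _ (mC i j) (mBk F (inr (i, j)))).
Qed.

Lemma P_bits F : P [set w | bits w = F] = (WT F)%:E.
Proof.
rewrite bits_eq hind.2; last exact: mBk.
rewrite (eq_bigr (fun k => (match k with
   | inl ij => wt (inl ij.1) (F ij.2 (inl ij.1))
   | inr ij => wt (inr ij.1) (F ij.2 (inr ij.1)) end)%:E)); last first.
  move=> [[i j]|[i j]] _ /=; rewrite /Bk /=; case: (F j _) => /=.
  - exact: hW1.
  - exact: PW1C.
  - exact: PC0C.
  - exact: PC0.
rewrite prodEFin; congr (_%:E).
rewrite big_sumType /= /WT.
under [RHS]eq_bigr => j _ do rewrite big_sumType.
rewrite big_split /=.
rewrite -(pair_bigA _ (fun i j => wt (inl i) (F j (inl i)))).
rewrite -(pair_bigA _ (fun i j => wt (inr i) (F j (inr i)))).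
by congr (_ * _); apply: exchange_big.
Qed.


Lemma pred_meas (H : pred {ffun 'I_n -> {ffun Q -> bool}}) :
  measurable [set w | H (bits w)].
Proof.
have -> : [set w | H (bits w)] = \bigcup_(F in [set F | H F]) [set w | bits w = F].
  rewrite eqEsubset; split => w /=.
  - by move=> Hw; exists (bits w).
  - by move=> [F /= HF ->].
apply: fin_bigcup_measurable; first exact: finite_finset.
move=> F _; exact: bits_meas.
Qed.

Lemma P_event_seq (G : pred {ffun 'I_n -> {ffun Q -> bool}}) s : uniq s ->
  P [set w | (bits w \in s) && G (bits w)] = (\sum_(F <- s | G F) WT F)%:E.
Proof.
elim: s => [_|a s IH /= /andP[aNs us]].
  rewrite big_nil (_ : [set w | _] = set0) ?measure0 //.
  by rewrite eqEsubset; split => w //=.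
rewrite big_cons.
have -> : [set w | (bits w \in a :: s) && G (bits w)] =
   [set w | (bits w == a) && G a] `|` [set w | (bits w \in s) && G (bits w)].
  rewrite eqEsubset; split => w /=; rewrite inE.
  - case/andP => /orP[/eqP Ea|Es] HG.
    + by left; rewrite Ea eqxx -Ea HG.
    + by right; rewrite Es HG.
  - case => /andP[Ea HG].
    + by move/eqP: Ea => Ea; rewrite Ea eqxx /= HG.
    + by rewrite Ea HG orbT.
rewrite measureU; first last.
- rewrite eqEsubset; split => w //= [/andP[/eqP -> _] /andP[]].
  by rewrite (negbTE aNs).
- exact: (pred_meas (fun F => (F \in s) && G F)).
- exact: (pred_meas (fun F => (F == a) && G a)).
transitivity ((if G a then WT a else 0)%:E + (\sum_(F <- s | G F) WT F)%:E).
  congr (_ + _); last exact: IH.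
  case: (G a).
    have -> : [set w | (bits w == a) && true] = [set w | bits w = a].
      by rewrite eqEsubset; split => w /=; rewrite andbT => /eqP.
    exact: P_bits.
  have -> : [set w | (bits w == a) && false] = set0.
    by rewrite eqEsubset; split => w //=; rewrite andbF.
  exact: measure0.
by case: (G a); rewrite -EFinD ?add0r.
Qed.

Lemma P_event (G : pred {ffun 'I_n -> {ffun Q -> bool}}) :
  P [set w | G (bits w)] = (\sum_(F | G F) WT F)%:E.
Proof.
rewrite -P_event_seq ?index_enum_uniq //.
by congr (P _); rewrite eqEsubset; split => w /=; rewrite mem_index_enum.
Qed.

End Fixed.

Local Close Scope classical_set_scope.

Lemma sum_ffun_prod (R : realType) (K J : finType) (rho : K -> J -> R) :
  \sum_(g : {ffun K -> J}) \prod_k rho k (g k) = \prod_k \sum_b rho k b.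
Proof. by rewrite bigA_distr_bigA. Qed.

Lemma prod_const_ord (R : realType) n (c : R) : \prod_(j < n) c = c ^+ n.
Proof. by rewrite big_const_ord; elim: n => //= n ->; rewrite exprS. Qed.

Lemma prod3 (R : realType) (K : finType) (a b c : K) (f : K -> R) :
  a != b -> a != c -> b != c ->
  (forall q, q != a -> q != b -> q != c -> f q = 1) ->
  \prod_q f q = f a * f b * f c.
Proof.
move=> ab ac bc H.
rewrite (bigD1 a) //= (bigD1 b) /=; last by rewrite eq_sym.
rewrite (bigD1 c) /=; last by rewrite eq_sym ac eq_sym bc.
rewrite big1 ?mulr1 ?mulrA // => q /andP[/andP[qa qb] qc]; exact: H.
Qed.

Section Comb.
Variables (R : realType) (theta : R) (m n : nat).
Hypothesis ht : 0 < theta < 1.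
Local Notation Q := (Q m).
Local Notation wt := (@wt R theta m).
Local Notation WT := (@WT R theta m n).
Local Notation FF := {ffun 'I_n -> {ffun Q -> bool}}.

Lemma wt_ge0 q b : 0 <= wt q b.
Proof.
case/andP: ht => t0 t1.
case: q => i /=; case: b => //.
- exact: ltW.
- by rewrite subr_ge0 ltW.
Qed.

Lemma wt_sum q : wt q true + wt q false = 1.
Proof. by case: q => i /=; rewrite ?addr0 // addrC subrK. Qed.

Lemma WT_ge0 F : 0 <= WT F.
Proof. by apply: prodr_ge0 => j _; apply: prodr_ge0 => q _; exact: wt_ge0. Qed.

Lemma WT_col (psi : 'I_n -> {ffun Q -> bool} -> R) :
  \sum_(F : FF) WT F * \prod_j psi j (F j) =
  \prod_j \sum_(g : {ffun Q -> bool}) (\prod_q wt q (g q)) * psi j g.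
Proof.
rewrite -sum_ffun_prod; apply: eq_bigr => F _.
by rewrite /Submission.WT -big_split.
Qed.

Lemma WT_total : \sum_(F : FF) WT F = 1.
Proof.
have E : \sum_(F : FF) WT F = \sum_(F : FF) WT F * \prod_(j < n) (fun _ _ => (1:R)) j (F j).
  by apply: eq_bigr => F _; rewrite big1 ?mulr1.
rewrite E (WT_col (fun _ _ => 1)); apply: big1 => j _.
under eq_bigr do rewrite mulr1.
rewrite sum_ffun_prod; apply: big1 => q _.
by rewrite big_bool /= wt_sum.
Qed.


Lemma prod_ind (b : 'I_n -> bool) (x : R) :
  \prod_j (if b j then 1 else x) = x ^+ #|[set j | ~~ b j]|.
Proof.
rewrite (bigID b) /= big1 ?mul1r; last by move=> j ->.
rewrite -prodr_const; apply: eq_big => j; first by rewrite inE.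
by move/negbTE ->.
Qed.

Definition bad2 (i : 'I_m) (F : FF) : bool := (#|[set j | ~~ F j (inl i)]| < m - 1)%N.

Lemma bound2 (i : 'I_m) (t : R) : 1 <= t ->
  \sum_(F : FF) WT F * (bad2 i F)%:R <= t ^+ m * (theta + (1 - theta) * t^-1) ^+ n.
Proof.
move=> t1; have t0 : 0 < t by apply: lt_le_trans ltr01 t1.
apply: (@le_trans _ _ (\sum_(F : FF) WT F * (t ^+ m * \prod_j (if F j (inl i) then 1 else t^-1)))).
  apply: ler_sum => F _; apply: ler_wpM2l; first exact: WT_ge0.
  rewrite (prod_ind (fun j => F j (inl i))) /bad2.
  set Z := #|[set j | ~~ F j (inl i)]|.
  have [hb|hb] := ltnP Z (m - 1); last first.
    by apply: mulr_ge0; apply: exprn_ge0; rewrite ?invr_ge0 ltW.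
  have Zm : (Z <= m)%N by apply: leq_trans (ltnW hb) (leq_subr _ _).
  rewrite -(subnK Zm) exprD -mulrA exprVn mulfV ?mulr1 ?expf_neq0 ?gt_eqF //.
  exact: exprn_ege1.
under eq_bigr do rewrite mulrCA.
rewrite -mulr_sumr; apply: ler_wpM2l; first by apply: exprn_ge0; rewrite ltW.
rewrite (WT_col (fun j g => if g (inl i) then 1 else t^-1)).
rewrite -prod_const_ord le_eqVlt; apply/orP; left; apply/eqP.
apply: eq_bigr => j _.
rewrite (eq_bigr (fun g : {ffun Q -> bool} => \prod_q (wt q (g q) *
     (if (q == inl i) && ~~ g q then t^-1 else 1)))); last first.
  move=> g _; rewrite big_split /=; congr (_ * _).
  rewrite (bigD1 (inl i)) //= big1 ?mulr1; last by move=> q /negbTE ->.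
  by rewrite eqxx; case: (g (inl i)).
rewrite (@sum_ffun_prod _ _ _ (fun q b => wt q b * (if (q == inl i) && ~~ b then t^-1 else 1))).
rewrite (bigD1 (inl i)) //= [X in _ * X]big1 ?mulr1.
  by rewrite big_bool /= eqxx /= mulr1.
move=> q /negbTE qi; rewrite big_bool /= qi /= !mulr1; exact: wt_sum.
Qed.


Lemma forall_prod (K : finType) (b : K -> bool) :
  ([forall j, b j] %:R : R) = \prod_j (b j)%:R.
Proof.
case: (boolP [forall j, b j]) => [/forallP H|/forallPn [j Hj]].
  by rewrite big1 // => j _; rewrite H.
by rewrite (bigD1 j) //= (negbTE Hj) mul0r.
Qed.

Lemma natr_andb (a b : bool) : ((a && b)%:R : R) = a%:R * b%:R.
Proof. by case: a; case: b; rewrite /= ?mulr0 ?mulr1. Qed.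

Definition bad3 (i i' : 'I_m) (F : FF) : bool :=
  [forall j, ~~ (~~ F j (inl i) && (F j (inl i') && F j (inr i')))].

Lemma cw_total : \sum_(g : {ffun Q -> bool}) \prod_q wt q (g q) = 1.
Proof.
rewrite sum_ffun_prod; apply: big1 => q _.
by rewrite big_bool /= wt_sum.
Qed.

Lemma bound3 (i i' : 'I_m) : i != i' ->
  \sum_(F : FF) WT F * (bad3 i i' F)%:R <= (1 - theta * (1 - theta)) ^+ n.
Proof.
move=> ii'.
set phi := fun g : {ffun Q -> bool} => ~~ (~~ g (inl i) && (g (inl i') && g (inr i'))).
rewrite (eq_bigr (fun F : FF => WT F * \prod_j (fun _ g => (phi g)%:R : R) j (F j))); last first.
  by move=> F _; rewrite /bad3 forall_prod.
rewrite (WT_col (fun _ g => (phi g)%:R)).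
rewrite -prod_const_ord le_eqVlt; apply/orP; left; apply/eqP.
apply: eq_bigr => j _.
have ab : inl i != inl i' :> Q by apply/eqP => -[] E; move: ii'; rewrite E eqxx.
have ac : inl i != inr i' :> Q by [].
have bc : inl i' != inr i' :> Q by [].
set ind := fun (q : Q) (b : bool) => if q == inl i then ~~ b else if q == inl i' then b
   else if q == inr i' then b else true.
have E1 : forall g : {ffun Q -> bool},
    (\prod_q wt q (g q)) * (phi g)%:R =
    \prod_q wt q (g q) - \prod_q (wt q (g q) * (ind q (g q))%:R).
  move=> g; rewrite big_split /=.
  rewrite [\prod_q (ind q (g q))%:R](@prod3 _ _ (inl i) (inl i') (inr i')) //; last first.
    by move=> q qa qb qc; rewrite /ind (negbTE qa) (negbTE qb) (negbTE qc).
  rewrite /ind eqxx eq_sym (negbTE ab) eqxx /=.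
  rewrite eqxx.
  rewrite /phi; case: (g (inl i)); case: (g (inl i')); case: (g (inr i')); by rewrite /= ?mulr1 ?mulr0 ?subrr ?subr0.
rewrite (eq_bigr _ (fun g _ => E1 g)) sumrB cw_total.
rewrite (@sum_ffun_prod _ _ _ (fun q b => wt q b * (ind q b)%:R)).
rewrite (@prod3 _ _ (inl i) (inl i') (inr i')) //; last first.
  move=> q qa qb qc; rewrite big_bool /= /ind (negbTE qa) (negbTE qb) (negbTE qc) /=.
  by rewrite !mulr1 wt_sum.
rewrite !big_bool /= /ind eqxx eq_sym (negbTE ab) eqxx /=.
rewrite eqxx /=.
by rewrite !mulr1 !mulr0 ?mul0r !addr0 ?add0r mulr1 (mulrC (1 - theta)).
Qed.


Definition Zb (F : FF) i j := F j (inl i) && F j (inr i).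
Definition Mat (F : FF) : 'I_m -> 'I_n -> R := fun i j => (Zb F i j)%:R.
Definition Gd (F : FF) : Prop :=
  cond1 (Mat F) /\ cond2 (Mat F) /\ cond3 (Mat F).

Lemma natb_eq0 (b : bool) : ((b%:R : R) == 0) = ~~ b.
Proof. by case: b; rewrite /= ?oner_eq0 ?eqxx. Qed.

Lemma cond1_of2 (M : 'I_m -> 'I_n -> R) : cond2 M -> cond1 M.
Proof.
move=> h2; rewrite /cond1.
case: (posnP m) => [m0|m0].
  have -> : (m%:R : R) = 0 by rewrite m0.
  rewrite invr0 mulr0 add0r add0r; have := ler0n R n; lra.
have hs : forall i, (#|row_supp M i| <= n - (m - 1))%N.
  move=> i; have := h2 i.
  have := cardsC (row_supp M i); rewrite card_ord => hc h; lia.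
have mn : (m - 1 <= n)%N.
  have := h2 (Ordinal m0); have := cardsC (row_supp M (Ordinal m0)).
  rewrite card_ord => hc h; lia.
have hS : (supp_card M <= m * (n - (m - 1)))%N.
  rewrite /supp_card; apply: (@leq_trans (\sum_(i < m) (n - (m - 1)))).
    by apply: leq_sum => i _; exact: hs.
  rewrite big_const_ord; move: (n - (m - 1))%N => c.
  by elim: (m) => //= k IH; rewrite mulSn leq_add2l.
have mR : 0 < (m%:R : R) by rewrite ltr0n.
rewrite -(ler_nat R) natrM natrB // natrB // in hS.
have h : (supp_card M)%:R / m%:R <= n%:R - (m%:R - 1%:R) :> R.
  by rewrite ler_pdivrMr // mulrC.
lra.
Qed.

Lemma good_of (F : FF) : (forall i, ~~ bad2 i F) ->
  (forall i i', i != i' -> ~~ bad3 i i' F) -> Gd F.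
Proof.
move=> h2 h3.
have c2 : cond2 (Mat F).
  move=> i; have := h2 i; rewrite /bad2 -leqNgt => h.
  apply: leq_trans h _; apply: subset_leq_card; apply/fintype.subsetP => j.
  rewrite !inE /Mat natb_eq0 negbK /Zb => hj.
  by rewrite (negbTE hj).
split; first exact: cond1_of2.
split => // i i' ii'.
have := h3 i i' ii'; rewrite /bad3 => /forallPn [j]; rewrite negbK.
case/andP => hi /andP[hi' hc]; exists j.
by rewrite /Mat /Zb (negbTE hi) hi' hc /= oner_eq0.
Qed.

Lemma sum_const_ord (k : nat) (c : R) : \sum_(i < k) c = k%:R * c.
Proof.
rewrite big_const_ord; elim: k => [|k IH] /=; first by rewrite mul0r.
by rewrite IH -addn1 natrD mulrDl mul1r addrC.
Qed.

Lemma good_ge (t : R) : 1 <= t ->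
  1 - (m%:R * (t ^+ m * (theta + (1 - theta) * t^-1) ^+ n) +
       m%:R * (m%:R * (1 - theta * (1 - theta)) ^+ n))
  <= \sum_(F : FF | `[< Gd F >]) WT F.
Proof.
move=> t1.
have E : \sum_(F : FF | `[< Gd F >]) WT F = 1 - \sum_(F : FF | ~~ `[< Gd F >]) WT F.
  by rewrite -(WT_total) [X in _ = X - _](bigID (fun F => `[< Gd F >])) /= addrK.
rewrite E lerD2l lerN2.
pose A := fun F : FF => (\sum_i (bad2 i F)%:R : R).
pose B := fun F : FF => (\sum_i \sum_i' ((i != i') && bad3 i i' F)%:R : R).
have hAB : forall F, 0 <= A F + B F.
  by move=> F; apply: addr_ge0; apply: sumr_ge0 => i _; rewrite ?ler0n //; apply: sumr_ge0 => *; exact: ler0n.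
have Hle2 : \sum_(F : FF | ~~ `[< Gd F >]) WT F * (A F + B F) <= \sum_(F : FF) WT F * (A F + B F).
  rewrite [X in _ <= X](bigID (fun F => `[< Gd F >])) /= lerDr.
  by apply: sumr_ge0 => F _; apply: mulr_ge0; [exact: WT_ge0|exact: hAB].
apply: le_trans (le_trans Hle2 _).
  apply: ler_sum => F hF.
  rewrite -[X in X <= _]mulr1; apply: ler_wpM2l; first exact: WT_ge0.
  case: (boolP [forall i, ~~ bad2 i F]) => [/forallP H2|/forallPn [i Hi]].
    case: (boolP [forall i, forall i', (i != i') ==> ~~ bad3 i i' F]) =>
        [/forallP H3|/forallPn [i /forallPn [i' Hi]]].
      exfalso; move/negP: hF; apply; apply/asboolP; apply: good_of => // i i' ii'.
      by have /forallP/(_ i')/implyP := H3 i; apply.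
    rewrite negb_imply negbK in Hi.
    rewrite /B (bigD1 i) //= (bigD1 i') //= Hi.
    have hA : 0 <= A F by apply: sumr_ge0 => *; exact: ler0n.
    have h1 : 0 <= \sum_(i0 | i0 != i) \sum_i'0 ((i0 != i'0) && bad3 i0 i'0 F)%:R :> R.
      by apply: sumr_ge0 => *; apply: sumr_ge0 => *; exact: ler0n.
    have h2 : 0 <= \sum_(i0 | i0 != i') ((i != i0) && bad3 i i0 F)%:R :> R.
      by apply: sumr_ge0 => *; exact: ler0n.
    rewrite /= (_ : (1%:R : R) = 1) //. lra.
  rewrite negbK in Hi.
  rewrite /A (bigD1 i) //= Hi.
  have hB : 0 <= B F by apply: sumr_ge0 => *; apply: sumr_ge0 => *; exact: ler0n.
  have h1 : 0 <= \sum_(i0 | i0 != i) (bad2 i0 F)%:R :> R.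
    by apply: sumr_ge0 => *; exact: ler0n.
  rewrite /= (_ : (1%:R : R) = 1) //. lra.
under eq_bigr do rewrite mulrDr.
rewrite big_split /= lerD //.
  rewrite /A; under eq_bigr do rewrite mulr_sumr.
  rewrite exchange_big /= -sum_const_ord; apply: ler_sum => i _.
  exact: bound2.
rewrite /B; under eq_bigr do rewrite mulr_sumr.
rewrite exchange_big /= -sum_const_ord; apply: ler_sum => i _.
under eq_bigr do rewrite mulr_sumr.
rewrite exchange_big /= -sum_const_ord; apply: ler_sum => i' _.
case: (eqVneq i i') => [_|ii'] /=.
  rewrite big1 ?exprn_ge0 // => [|F _]; last by rewrite mulr0.
  case/andP: ht => t0 t1'; nra.
exact: bound3.
Qed.

End Comb.


Lemma pow_expR (R : realType) (x y : R) k : 0 <= x -> x <= expR y ->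
  x ^+ k <= expR (k%:R * y).
Proof.
move=> x0 xy; rewrite expRM_natl; apply: lerXn2r => //; rewrite nnegrE //.
Qed.

Lemma decay (R : realType) (k : R) (M : nat) : 0 < k -> (0 < M)%N ->
  M%:R * (M%:R * expR (- (k * M%:R))) <= 27 / (k ^+ 3 * M%:R).
Proof.
move=> k0 M0.
have Mp : 0 < (M%:R : R) by rewrite ltr0n.
set x := k * M%:R.
have x0 : 0 < x by rewrite mulr_gt0.
have ex : (x / 3) ^+ 3 <= expR x.
  have -> : expR x = expR (x / 3) ^+ 3 by rewrite -expRM_natl; congr expR; field.
  apply: lerXn2r; rewrite ?nnegrE ?expR_ge0 //.
    by rewrite divr_ge0 // ltW.
  have := expR_ge1Dx (x / 3); lra.
rewrite expRN.
have ep : 0 < expR x := expR_gt0 x.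
rewrite ler_pdivlMr; last by rewrite mulr_gt0 // exprn_gt0.
have -> : M%:R * (M%:R / expR x) * (k ^+ 3 * M%:R) = x ^+ 3 / expR x.
  by rewrite /x; field; rewrite gt_eqF.
rewrite ler_pdivrMr //.
rewrite (_ : (x / 3) ^+ 3 = x ^+ 3 / 27) in ex; last by field.
move: ex; set y := x ^+ 3; lra.
Qed.

Lemma err_bound (R : realType) (th c : R) : 0 < th < 1 -> 1 < (1 - th) * c ->
  exists2 k : R, 0 < k & forall m n : nat, (0 < m)%N -> c * m%:R <= n%:R ->
  let t := (1 + (1 - th) * c) / 2 in
  m%:R * (t ^+ m * (th + (1 - th) * t^-1) ^+ n) +
  m%:R * (m%:R * (1 - th * (1 - th)) ^+ n) <= 54 / (k ^+ 3 * m%:R).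
Proof.
move=> /andP[th0 th1] bc1.
have b0 : 0 < 1 - th by rewrite subr_gt0.
move: b0 bc1; move Hb : (1 - th) => b b0 bc1.
have t1 : 1 < (1 + b * c) / 2 by lra.
move: t1; move Ht : ((1 + b * c) / 2) => t t1.
have t0 : 0 < t by lra.
have c0 : 0 < c.
  rewrite ltNge; apply/negP => hc; have : b * c <= 0 by rewrite mulr_ge0_le0 // ltW.
  lra.
have hc : c = (2 * t - 1) / b by rewrite -Ht; field; rewrite gt_eqF.
have k10 : 0 < (t - 1) ^+ 2 / t by rewrite divr_gt0 // exprn_gt0 // subr_gt0.
have k20 : 0 < c * th * b by rewrite !mulr_gt0.
move: k10 k20; move Hk1 : ((t - 1) ^+ 2 / t) => k1 k10.
move Hk2 : (c * th * b) => k2 k20.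
exists (Num.min k1 k2); first by rewrite lt_min k10 k20.
move=> m n m0 cmn /=.
have mp : 0 < (m%:R : R) by rewrite ltr0n.
have kk1 : Num.min k1 k2 <= k1 by rewrite ge_min lexx.
have kk2 : Num.min k1 k2 <= k2 by rewrite ge_min lexx orbT.
have k0 : 0 < Num.min k1 k2 by rewrite lt_min k10 k20.
move: kk1 kk2 k0; move: (Num.min k1 k2) => k kk1 kk2 k0.
have hA : t ^+ m <= expR (m%:R * (t - 1)).
  apply: pow_expR; first exact: ltW.
  by have := expR_ge1Dx (t - 1); rewrite addrC subrK.
have q0 : 0 <= th + b * t^-1.
  by apply: addr_ge0; [exact: ltW|apply: mulr_ge0; rewrite ?invr_ge0 ltW].
have z0 : 0 <= b * (1 - t^-1).
  apply: mulr_ge0; first exact: ltW.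
  by rewrite subr_ge0 invf_le1 // ltW.
have qz : th + b * t^-1 = 1 + - (b * (1 - t^-1)) by rewrite -Hb; field; rewrite gt_eqF.
move: q0 qz; move: (th + b * t^-1) => q q0 qz.
move: z0 qz; move Hz : (b * (1 - t^-1)) => z z0 qz.
have hB : q ^+ n <= expR (c * m%:R * - z).
  apply: le_trans (@pow_expR _ q (- z) n q0 _) _.
    by have := expR_ge1Dx (- z); rewrite qz.
  by rewrite ler_expR ler_wnM2r // oppr_le0.
have hAB : t ^+ m * q ^+ n <= expR (- (k * m%:R)).
  apply: le_trans (ler_pM (exprn_ge0 _ (ltW t0)) (exprn_ge0 _ q0) hA hB) _.
  rewrite -expRD ler_expR.
  have -> : m%:R * (t - 1) + c * m%:R * - z = - (k1 * m%:R).
    by rewrite -Hz -Hk1 hc; field; rewrite !gt_eqF.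
  by rewrite lerN2 ler_pM2r.
have g0 : 0 <= 1 - th * b by rewrite -Hb; nra.
have hC : (1 - th * b) ^+ n <= expR (- (k * m%:R)).
  apply: le_trans (@pow_expR _ (1 - th * b) (- (th * b)) n g0 _) _.
    by have := expR_ge1Dx (- (th * b)); lra.
  rewrite ler_expR.
  have h : c * m%:R * (th * b) <= n%:R * (th * b) by rewrite ler_pM2r ?mulr_gt0.
  have h' : k * m%:R <= k2 * m%:R by rewrite ler_pM2r.
  rewrite -Hk2 in h'.
  have -> : n%:R * - (th * b) = - (n%:R * (th * b)) by rewrite mulrN.
  rewrite lerN2; apply: le_trans h' _; apply: le_trans _ h.
  by rewrite le_eqVlt; apply/orP; left; apply/eqP; ring.
have E0 := expR_ge0 (- (k * m%:R)).
have hD := @decay _ k m k0 m0.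
move: hAB hC hD E0; move: (expR (- (k * m%:R))) => E hAB hC hD E0.
have m1 : 1 <= (m%:R : R) by rewrite ler1n.
have -> : 54 / (k ^+ 3 * m%:R) = 2 * (27 / (k ^+ 3 * m%:R)).
  by field; rewrite !gt_eqF // exprn_gt0.
move: hD; move: (27 / (k ^+ 3 * m%:R)) => D hD.
have e1 : 0 <= (1 - th * b) ^+ n by rewrite exprn_ge0.
have e2 : 0 <= t ^+ m * q ^+ n by rewrite mulr_ge0 // exprn_ge0 // ltW.
move: hAB hC e1 e2; move: (t ^+ m * q ^+ n) ((1 - th * b) ^+ n) => u v hu hv v0 u0.
set M := (m%:R : R) in mp m1 hD *.
have h1 : M * u <= M * (M * E).
  apply: le_trans (_ : M * u <= M * E) _; first by rewrite ler_pM2l.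
  by have := ler_wpM2r (mulr_ge0 (ltW mp) E0) m1; rewrite mul1r.
have h2 : M * (M * v) <= M * (M * E) by rewrite !ler_pM2l // ?mulr_gt0.
lra.
Qed.

Local Open Scope classical_set_scope.

Lemma conds_ext1 (R : realType) m n (M M' : 'I_m -> 'I_n -> R) :
  (forall i j, (M i j != 0) = (M' i j != 0)) ->
  cond1 M /\ cond2 M /\ cond3 M -> cond1 M' /\ cond2 M' /\ cond3 M'.
Proof.
move=> H [h1 [h2 h3]].
have rs : forall i, row_supp M i = row_supp M' i.
  by move=> i; apply/setP => j; rewrite !inE H.
have sc : supp_card M = supp_card M'.
  by rewrite /supp_card; apply: eq_bigr => i _; rewrite rs.
split; first by rewrite /cond1 -sc.
split; first by move=> i; rewrite -rs.
move=> i i' ii'; have [j [hj hj']] := h3 i i' ii'; exists j; split.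
  by apply/eqP; rewrite -[_ == _]negbK -H hj eqxx.
by rewrite -H.
Qed.

Lemma P_good (R : realType) d (T : measurableType d) (P : probability T R)
  (theta : R) m n (X : 'I_m -> 'I_n -> T -> R) : iid_BG_matrix P theta X ->
  P [set w | cond1 (fun i j => X i j w) /\ cond2 (fun i j => X i j w) /\
             cond3 (fun i j => X i j w)] =
  (\sum_(F | `[< Gd R m n F >]) WT R theta m n F)%:E.
Proof.
case=> W [C [hXe hW hC hind]].
have hW1 : forall i j, P [set w | W i j w = 1] = theta%:E by move=> i j; case: (hW i j).
have key : forall w i j, (X i j w != 0) = (Mat R m n (bits R d T m n W C w) i j != 0).
  move=> w i j; rewrite /Mat natb_eq0 negbK /Zb /bits !ffunE hXe mulf_eq0 negb_or.
  case: (hW i j) => [h _]; case: (h w) => ->; rewrite ?eqxx /= ?oner_eq0 //.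
  by rewrite (_ : (0 == 1 :> R) = false) //; apply/eqP => /esym/eqP; rewrite oner_eq0.
rewrite -(@P_event R d T P theta m n W C hW1 hC hind (fun F => `[< Gd R m n F >])).
congr (P _); rewrite eqEsubset; split => w /=.
- by move=> h; apply/asboolP; apply: conds_ext1 h => i j; rewrite key.
- by move/asboolP => h; apply: conds_ext1 h => i j; rewrite key.
Qed.

Lemma ev_nat (P : nat -> Prop) : (\forall k \near \oo, P k) -> exists N, forall k, (N <= k)%N -> P k.
Proof. by move=> [N _ HN]; exists N => k hk; apply: HN. Qed.

Theorem corollary1 (R : realType) (theta nbar : R)
  (htheta : 0 < theta < 1) (hnbar : 0 < nbar)
  (m n : nat -> nat) (hm : forall k, (0 < m k)%N) (hn : forall k, (0 < n k)%N)
  (hmoo : forall N : nat, exists K : nat, forall k, (K <= k)%N -> (N <= m k)%N)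
  (hnoo : forall N : nat, exists K : nat, forall k, (K <= k)%N -> (N <= n k)%N)
  (hratio : (fun k => (n k)%:R / (m k)%:R : R) @ \oo --> nbar)
  (d : nat -> measure_display) (T : forall k, measurableType (d k))
  (P : forall k, probability (T k) R)
  (X : forall k, 'I_(m k) -> 'I_(n k) -> T k -> R)
  (hX : forall k, iid_BG_matrix (P k) theta (X k))
  (hbig : 1 / (1 - theta) < nbar) :
  (fun k => P k [set w | cond1 (fun i j => X k i j w) /\
                         cond2 (fun i j => X k i j w) /\
                         cond3 (fun i j => X k i j w)]) @ \oo --> 1%E.
Proof.
pose S := fun k => \sum_(F | `[< Gd R (m k) (n k) F >]) WT R theta (m k) (n k) F.
have EP : (fun k => P k [set w | cond1 (fun i j => X k i j w) /\
                         cond2 (fun i j => X k i j w) /\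
                         cond3 (fun i j => X k i j w)]) = (fun k => (S k)%:E).
  by apply: funext => k; exact: P_good (hX k).
rewrite EP; apply: cvg_EFin; first exact: nearW.
apply/cvgrPdist_lt => e e0 /=.
have /andP[th0 th1] := htheta.
have b0 : 0 < 1 - theta by rewrite subr_gt0.
set c := ((1 - theta)^-1 + nbar) / 2.
have hbn : 1 < (1 - theta) * nbar.
  by move: hbig; rewrite ltr_pdivrMr // mulrC.
have hb : 1 < (1 - theta) * c.
  have -> : (1 - theta) * c = (1 + (1 - theta) * nbar) / 2.
    by rewrite /c; field; rewrite gt_eqF.
  move: hbn; move: ((1 - theta) * nbar) => z hz; lra.
have [kap kap0 Hk] := @err_bound R theta c htheta hb.
have cn : c < nbar.
  rewrite /c; have : (1 - theta)^-1 < nbar by rewrite -div1r.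
  move: ((1 - theta)^-1) => z hz; lra.
have ncp : 0 < nbar - c by rewrite subr_gt0.
have [N1 HN1] := (@ev_nat _ ((cvgrPdist_lt _ _).1 hratio (nbar - c) ncp)).
have A0 : 0 < 54 / kap ^+ 3 by rewrite divr_gt0 // exprn_gt0.
move: A0; move HA : (54 / kap ^+ 3) => A A0.
have [N2 HN2] := hmoo (Num.trunc (A / e)).+1.
exists (maxn N1 N2) => // j /=; rewrite geq_max => /andP[j1 j2].
have mj : 0 < ((m j)%:R : R) by rewrite ltr0n.
have hN := HN2 j j2.
have cmn : c * (m j)%:R <= (n j)%:R.
  have := HN1 j j1; rewrite /= => h.
  have h2 := ler_norm (nbar - (n j)%:R / (m j)%:R).
  have : c < (n j)%:R / (m j)%:R by lra.
  by rewrite ltr_pdivlMr // => /ltW.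
set t := (1 + (1 - theta) * c) / 2.
have ht1 : 1 <= t by rewrite /t; lra.
have G := @good_ge R theta (m j) (n j) htheta t ht1.
have E := Hk (m j) (n j) (hm j) cmn; rewrite /= -/t in E.
have S1 : S j <= 1.
  rewrite -(WT_total R theta (m j) (n j)) (bigID (fun F => `[< Gd R (m j) (n j) F >])) /=.
  rewrite lerDl; apply: sumr_ge0 => F _; exact: WT_ge0.
rewrite ger0_norm; last by rewrite subr_ge0.
have E2 : 54 / (kap ^+ 3 * (m j)%:R) = A / (m j)%:R.
  by rewrite -HA; field; rewrite (gt_eqF mj) gt_eqF // exprn_gt0.
rewrite E2 in E.
have hNm : ((Num.trunc (A / e)).+1%:R : R) <= (m j)%:R by rewrite ler_nat.
have hT := truncnS_gt (A / e).
have hAe : A / (m j)%:R < e.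
  rewrite ltr_pdivrMr //.
  have : A / e < (m j)%:R by apply: lt_le_trans hT hNm.
  by rewrite ltr_pdivrMr // mulrC.
rewrite /S in S1 *.
lra.
Qed.
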